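(* Consider a tree power network $(\mathcal{V},\mathcal{E})$, $\mathcal{V}=\{1,\dots,n\}$, with fixed voltage magnitudes $|V_i|=\overline{V}_i>0$, angle limits $\underline{\theta}_{ik}\in[-\pi,0]$, $\overline{\theta}_{ik}\in[0,\pi]$ on each line, and bus power bounds $\underline{P}_i\le P_i\le\overline{P}_i$. Let $\mathcal{P}=\mathcal{P}_\theta\cap\mathcal{P}_P$, suppose $\mathcal{P}\neq\emptyset$, and assume $$-\tan^{-1}\!\Big(\frac{b_{ik}}{g_{ik}}\Big)<\underline{\theta}_{ik}\le\overline{\theta}_{ik}<\tan^{-1}\!\Big(\frac{b_{ik}}{g_{ik}}\Big)\quad\text{for all }(i,k)\in\mathcal{E}.$$ Then $\mathcal{O}(\mathcal{P})=\mathcal{O}(\mathrm{conv}(\mathcal{P}_\theta)\cap\mathcal{P}_P)$.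
   Context: Each line $(i,k)\in\mathcal{E}$ has admittance $y_{ik}=g_{ik}-jb_{ik}$ with $g_{ik},b_{ik}\ge0$. For $\theta_{ik}=\theta_i-\theta_k$ (difference of bus voltage phases), the line flows are $P_{ik}=\overline{V}_i^2 g_{ik}+\overline{V}_i\overline{V}_k b_{ik}\sin\theta_{ik}-\overline{V}_i\overline{V}_k g_{ik}\cos\theta_{ik}$ and $P_{ki}=\overline{V}_k^2 g_{ik}-\overline{V}_i\overline{V}_k b_{ik}\sin\theta_{ik}-\overline{V}_i\overline{V}_k g_{ik}\cos\theta_{ik}$. The angle-constrained flow region of line $(i,k)$, $\mathcal{F}_{\theta_{ik}}\subset\mathbb{R}^2$, is the set of $(P_{ik},P_{ki})$ as $\theta_{ik}$ ranges over $[\underline{\theta}_{ik},\overline{\theta}_{ik}]$; $\mathcal{F}_\theta=\prod_{(i,k)\in\mathcal{E}}\mathcal{F}_{\theta_{ik}}$. $\mathbf{A}$ is the $n\times2|\mathcal{E}|$ matrix with $A(i,(k,l))=1$ if $i=k$ and $0$ otherwise, so $(\mathbf{A}\mathbf{f})_i=\sum_{k\sim i}P_{ik}$. $\mathcal{P}_\theta=\mathbf{A}\mathcal{F}_\theta$ and $\mathcal{P}_P=\{\mathbf{p}\in\mathbb{R}^n:\underline{P}_i\le P_i\le\overline{P}_i\ \forall i\}$. For $\mathcal{A}\subseteq\mathbb{R}^m$, $\mathcal{O}(\mathcal{A})$ is the set of Pareto-optimal points (no $y\in\mathcal{A}$ with $y\le x$ componentwise, strict in some coordinate); $\mathrm{conv}$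 denotes convex hull. *)

(* Defs.v *)
From HB Require Import structures.
From mathcomp Require Import all_boot all_order all_algebra.
From mathcomp Require Import all_classical all_reals all_analysis.
Set Implicit Arguments. Unset Strict Implicit. Unset Printing Implicit Defensive.
Import Order.TTheory GRing.Theory Num.Theory.
Local Open Scope ring_scope.
Local Open Scope classical_set_scope.

Section PowerDefs.
Variables (R : realType) (n : nat).

Definition adj (E : {set 'I_n * 'I_n}) : rel 'I_n :=
  fun i k => ((i, k) \in E) || ((k, i) \in E).

Definition is_tree (E : {set 'I_n * 'I_n}) : Prop :=
  [/\ (0 < n)%N,
      (forall e, e \in E -> e.1 != e.2),
      (forall i k, (i, k) \in E -> (k, i) \notin E),
      (forall i k, connect (adj E) i k) &
      #|E| = n.-1].

Definition Edir (E : {set 'I_n * 'I_n}) : {set 'I_n * 'I_n} :=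
  E :|: [set (e.2, e.1) | e in E].

(* line flows of line (i,k) as functions of theta_ik *)
Definition Pik (V : 'I_n -> R) (g b : 'I_n -> 'I_n -> R) (i k : 'I_n) (t : R) : R :=
  V i ^+ 2 * g i k + V i * V k * b i k * sin t - V i * V k * g i k * cos t.
Definition Pki (V : 'I_n -> R) (g b : 'I_n -> 'I_n -> R) (i k : 'I_n) (t : R) : R :=
  V k ^+ 2 * g i k - V i * V k * b i k * sin t - V i * V k * g i k * cos t.

(* F_theta : flow vectors indexed by directed edges (values off Edir irrelevant) *)
Definition F_theta (E : {set 'I_n * 'I_n}) (V : 'I_n -> R)
  (g b lo hi : 'I_n -> 'I_n -> R) : set ('I_n * 'I_n -> R) :=
  [set f | forall i k, (i, k) \in E ->
     exists t, lo i k <= t <= hi i k /\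
       f (i, k) = Pik V g b i k t /\ f (k, i) = Pki V g b i k t].

Definition Amap (E : {set 'I_n * 'I_n}) (f : 'I_n * 'I_n -> R) : 'I_n -> R :=
  fun i => \sum_(d in Edir E | d.1 == i) f d.

Definition P_theta (E : {set 'I_n * 'I_n}) (V : 'I_n -> R)
  (g b lo hi : 'I_n -> 'I_n -> R) : set ('I_n -> R) :=
  Amap E @` F_theta E V g b lo hi.

Definition P_P (Plo Phi : 'I_n -> R) : set ('I_n -> R) :=
  [set p | forall i, Plo i <= p i <= Phi i].

End PowerDefs.

Definition convex_hull {R : realType} {I : Type} (A : set (I -> R)) : set (I -> R) :=
  [set x | exists (m : nat) (w : 'I_m -> R) (pts : 'I_m -> I -> R),
     (forall j, 0 <= w j) /\ \sum_(j < m) w j = 1 /\ (forall j, A (pts j)) /\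
     forall i, x i = \sum_(j < m) w j * pts j i].

Definition pareto {R : realType} {I : Type} (A : set (I -> R)) : set (I -> R) :=
  [set x | A x /\ ~ exists y, A y /\ (forall i, y i <= x i) /\ exists i, y i < x i].

(* arctan(b/g), with the convention arctan(+oo) = pi/2 when g = 0 *)
Definition crit_angle {R : realType} (g b : R) : R :=
  if g == 0 then pi / 2 else atan (b / g).

(* Main.v *)
Require Import Defs.
From HB Require Import structures.
From mathcomp Require Import all_boot all_order all_algebra.
From mathcomp Require Import all_classical all_reals all_analysis.
From mathcomp Require Import ring lra zify.
Import Order.TTheory GRing.Theory Num.Theory.
Import numFieldNormedType.Exports.
Local Open Scope ring_scope.


Section Trig.
Variable R : realType.

Lemma crit_le (g b : R) : 0 <= g -> crit_angle g b <= pi / 2.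
Proof.
move=> g0; rewrite /crit_angle; case: ifP => _ //; exact/ltW/atan_ltpi2.
Qed.

Lemma crit_N (g b s : R) : 0 <= g -> 0 <= b ->
  - crit_angle g b < s < crit_angle g b ->
  [/\ -(pi/2) < s < pi/2, (b = 0 -> g = 0) &
      (0 < b -> 0 < b * cos s - g * sin s /\ 0 < b * cos s + g * sin s)].
Proof.
move=> g0 b0 /andP[h1 h2].
have hc := @crit_le g b g0.
have s1 : -(pi/2) < s < pi/2.
  by apply/andP; split; [apply: le_lt_trans h1; rewrite lerN2 | apply: lt_le_trans hc].
have cs : 0 < cos s by apply: cos_gt0_pihalf.
split => //.
- move=> b00; move: h1 h2; rewrite /crit_angle; case: eqP => // /eqP gn0.
  by rewrite b00 mul0r atan0 oppr0 => a1 a2; have := lt_trans a1 a2; rewrite ltxx.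
- move=> bp; move: h1 h2; rewrite /crit_angle; case: eqP => [-> _ _|/eqP gn0].
    by rewrite !mul0r subr0 addr0 mulr_gt0.
  have gp : 0 < g by rewrite lt_neqAle eq_sym gn0.
  move=> h1 h2.
  have inI : forall y : R, atan y \in `](- (pi/2)), (pi/2)[.
    by move=> y; rewrite in_itv /= atan_gtNpi2 atan_ltpi2.
  have sI : s \in `](- (pi/2)), (pi/2)[ by rewrite in_itv /=.
  have t2 : tan s < b / g by rewrite -[b / g]atanK ltr_tan.
  have t1 : - (b / g) < tan s.
    by rewrite -[- (b/g)]atanK ltr_tan // atanN.
  move: t1 t2; rewrite /tan => t1 t2.
  have e1 : sin s < b / g * cos s by rewrite -ltr_pdivrMr.
  have e2 : - (b / g) * cos s < sin s by rewrite -ltr_pdivlMr.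
  have gi : g * (b / g) = b by rewrite mulrC divfK // gt_eqF.
  split.
  + have := e1; rewrite -(ltr_pM2l gp) mulrA gi; lra.
  + have := e2; rewrite -(ltr_pM2l gp) mulrA mulrN gi; lra.
Qed.


Lemma sin_sub_add (m d : R) :
  sin (m + d) - sin (m - d) = 2 * cos m * sin d /\
  cos (m + d) - cos (m - d) = - (2 * sin m * sin d).
Proof.
rewrite !sinD !cosD !sinN !cosN; split; ring.
Qed.

Lemma P_mono n (V : 'I_n -> R) (g b : 'I_n -> 'I_n -> R) i k (t1 t2 : R) :
  0 < V i -> 0 < V k -> 0 <= g i k -> 0 <= b i k ->
  - crit_angle (g i k) (b i k) < t1 -> t2 < crit_angle (g i k) (b i k) -> t1 <= t2 ->
  Pik V g b i k t1 <= Pik V g b i k t2 /\ Pki V g b i k t2 <= Pki V g b i k t1.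
Proof.
move=> Vi Vk g0 b0 h1 h2 t12.
set c := crit_angle (g i k) (b i k) in h1 h2.
have hc : c <= pi / 2 := crit_le (g i k) (b i k) g0.
set m := (t1 + t2) / 2; set d := (t2 - t1) / 2.
have e1 : t1 = m - d by rewrite /m /d; field.
have e2 : t2 = m + d by rewrite /m /d; field.
have mI : - c < m < c by apply/andP; split; rewrite /m; lra.
have [_ bz bp] := crit_N _ _ _ g0 b0 mI.
have sd : 0 <= sin d.
  apply: sin_ge0_pi; apply/andP; split; rewrite /d; first lra.
  have hh : (0:R) < pi := pi_gt0 _.
  have : (pi:R) / 2 <= pi by lra.
  lra.
have [es ec] := sin_sub_add m d.
have A0 : 0 < V i * V k by apply: mulr_gt0.
rewrite /Pik /Pki e1 e2.
have key1 : V i ^+ 2 * g i k + V i * V k * b i k * sin (m + d) - V i * V k * g i k * cos (m + d)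
  - (V i ^+ 2 * g i k + V i * V k * b i k * sin (m - d) - V i * V k * g i k * cos (m - d))
  = 2 * (V i * V k) * sin d * (b i k * cos m + g i k * sin m).
  have -> : sin (m + d) = sin (m - d) + 2 * cos m * sin d by rewrite -es; ring.
  have -> : cos (m + d) = cos (m - d) - 2 * sin m * sin d by rewrite -[cos (m + d)](subrK (cos (m - d))) ec; ring.
  ring.
have key2 : V k ^+ 2 * g i k - V i * V k * b i k * sin (m - d) - V i * V k * g i k * cos (m - d)
  - (V k ^+ 2 * g i k - V i * V k * b i k * sin (m + d) - V i * V k * g i k * cos (m + d))
  = 2 * (V i * V k) * sin d * (b i k * cos m - g i k * sin m).
  have -> : sin (m + d) = sin (m - d) + 2 * cos m * sin d by rewrite -es; ring.
  have -> : cos (m + d) = cos (m - d) - 2 * sin m * sin d by rewrite -[cos (m + d)](subrK (cos (m - d))) ec; ring.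
  ring.
have [bpos|bz0] : 0 < b i k \/ b i k = 0.
  by move: b0; rewrite le_eqVlt => /orP[/eqP ->|->]; [right|left].
- have [N1 N2] := bp bpos.
  have X : 0 <= 2 * (V i * V k) * sin d by apply: mulr_ge0 => //; apply: mulr_ge0 => //; lra.
  have Y1 : 0 <= 2 * (V i * V k) * sin d * (b i k * cos m + g i k * sin m) by apply: mulr_ge0 => //; lra.
  have Y2 : 0 <= 2 * (V i * V k) * sin d * (b i k * cos m - g i k * sin m) by apply: mulr_ge0 => //; lra.
  split; rewrite -subr_ge0; [rewrite key1 | rewrite key2]; done.
- have gz := bz bz0. rewrite gz bz0; split; rewrite !mulr0 !mul0r; lra.
Qed.

Lemma cont_trig (a c d : R) :
  continuous (fun t : R => a + c * sin t - d * cos t).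
Proof.
move=> x; apply: cvgB; [apply: cvgD; [exact: cvg_cst | apply: cvgM; [exact: cvg_cst| exact: continuous_sin]] | apply: cvgM; [exact: cvg_cst| exact: continuous_cos]].
Qed.

Lemma Pik_cont n (V : 'I_n -> R) (g b : 'I_n -> 'I_n -> R) i k :
  continuous (Pik V g b i k).
Proof. exact: cont_trig. Qed.

Lemma Pki_cont n (V : 'I_n -> R) (g b : 'I_n -> 'I_n -> R) i k :
  continuous (Pki V g b i k).
Proof.
have -> : Pki V g b i k = (fun t => V k ^+ 2 * g i k + (- (V i * V k * b i k)) * sin t
   - V i * V k * g i k * cos t).
  by apply: funext => t; rewrite /Pki mulNr.
exact: cont_trig.
Qed.

Lemma support n (V : 'I_n -> R) (g b : 'I_n -> 'I_n -> R) i k (s t : R) :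
  0 < V i -> 0 < V k -> 0 <= g i k -> 0 <= b i k ->
  0 <= (b i k * cos s - g i k * sin s) * (Pik V g b i k t - Pik V g b i k s)
     + (b i k * cos s + g i k * sin s) * (Pki V g b i k t - Pki V g b i k s).
Proof.
move=> Vi Vk g0 b0.
have -> : (b i k * cos s - g i k * sin s) * (Pik V g b i k t - Pik V g b i k s)
     + (b i k * cos s + g i k * sin s) * (Pki V g b i k t - Pki V g b i k s)
  = V i * V k * b i k * g i k * ((sin s - sin t) ^+ 2 + (cos s - cos t) ^+ 2).
  rewrite /Pik /Pki.
  have e1 := cos2Dsin2 s; have e2 := cos2Dsin2 t.
  have E : (sin s - sin t) ^+ 2 + (cos s - cos t) ^+ 2 =
     (cos s ^+ 2 + sin s ^+ 2) + (cos t ^+ 2 + sin t ^+ 2) - 2 * (sin s * sin t + cos s * cos t).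
    by ring.
  rewrite E e1 e2.
  transitivity (V i * V k * b i k * g i k * (2 * (cos s ^+ 2 + sin s ^+ 2) - 2 * (sin s * sin t + cos s * cos t))).
    by ring.
  by rewrite e1; ring.
apply: mulr_ge0; last by apply: addr_ge0; apply: sqr_ge0.
by apply: mulr_ge0 => //; apply: mulr_ge0 => //; apply: mulr_ge0; apply: ltW.
Qed.

Lemma wsum_aff m (w : 'I_m -> R) (X Y : 'I_m -> R) (N1 N2 a c : R) :
  \sum_(j < m) w j = 1 ->
  \sum_(j < m) w j * (N1 * (X j - a) + N2 * (Y j - c)) =
  N1 * (\sum_(j < m) w j * X j - a) + N2 * (\sum_(j < m) w j * Y j - c).
Proof.
move=> Hw.
transitivity (\sum_(j < m) (N1 * (w j * X j) + N2 * (w j * Y j) - (N1 * a + N2 * c) * w j)).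
  by apply: eq_bigr => j _; ring.
rewrite sumrB big_split /= -!mulr_sumr Hw; ring.
Qed.

Lemma wsum_bounds m (w : 'I_m -> R) (X : 'I_m -> R) (a c : R) :
  (forall j, 0 <= w j) -> \sum_(j < m) w j = 1 -> (forall j, a <= X j <= c) ->
  a <= \sum_(j < m) w j * X j <= c.
Proof.
move=> w0 Hw HX; apply/andP; split.
- rewrite -[a]mul1r -Hw mulr_suml; apply: ler_sum => j _.
  by apply: ler_wpM2l => //; case/andP: (HX j).
- rewrite -[c]mul1r -Hw mulr_suml; apply: ler_sum => j _.
  by apply: ler_wpM2l => //; case/andP: (HX j).
Qed.

Lemma arc_conv n (V : 'I_n -> R) (g b : 'I_n -> 'I_n -> R) i k (lo hi : R)
  m (w : 'I_m -> R) (ts : 'I_m -> R) :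
  0 < V i -> 0 < V k -> 0 <= g i k -> 0 <= b i k ->
  - crit_angle (g i k) (b i k) < lo -> lo <= hi -> hi < crit_angle (g i k) (b i k) ->
  (forall j, 0 <= w j) -> \sum_(j < m) w j = 1 -> (forall j, lo <= ts j <= hi) ->
  exists s, lo <= s <= hi /\
    Pik V g b i k s <= \sum_(j < m) w j * Pik V g b i k (ts j) /\
    Pki V g b i k s <= \sum_(j < m) w j * Pki V g b i k (ts j).
Proof.
move=> Vi Vk g0 b0 hlo lohi hhi w0 Hw Hts.
set v := \sum_(j < m) w j * Pki V g b i k (ts j).
set u := \sum_(j < m) w j * Pik V g b i k (ts j).
have inc : forall t1 t2, lo <= t1 -> t2 <= hi -> t1 <= t2 ->
    Pik V g b i k t1 <= Pik V g b i k t2 /\ Pki V g b i k t2 <= Pki V g b i k t1.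
  by move=> t1 t2 h1 h2 h12; apply: P_mono => //; [lra|lra].
have vb : Pki V g b i k hi <= v <= Pki V g b i k lo.
  apply: wsum_bounds => // j; case/andP: (Hts j) => a1 a2.
  by apply/andP; split; [case: (inc _ _ a1 (lexx hi) a2)| case: (inc _ _ (lexx lo) a2 a1)].
have [s sI fs] : exists2 s, s \in `[lo, hi] & Pki V g b i k s = v.
  apply: IVT => //; first by apply: continuous_subspaceT; exact: Pki_cont.
  case/andP: vb => vb1 vb2; apply/andP; split.
  - by rewrite ge_min vb1 orbT.
  - by rewrite le_max vb2.
move: sI; rewrite in_itv /= => /andP[s1 s2].
exists s; split; first by rewrite s1 s2.
split; last by rewrite fs.
have sc : - crit_angle (g i k) (b i k) < s < crit_angle (g i k) (b i k).
  by apply/andP; split; lra.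
have [_ bz bp] := crit_N _ _ _ g0 b0 sc.
have [bpos|bz0] : 0 < b i k \/ b i k = 0.
  by move: b0; rewrite le_eqVlt => /orP[/eqP ->|->]; [right|left].
- have [N1 N2] := bp bpos.
  have S : 0 <= \sum_(j < m) w j * ((b i k * cos s - g i k * sin s) * (Pik V g b i k (ts j) - Pik V g b i k s)
     + (b i k * cos s + g i k * sin s) * (Pki V g b i k (ts j) - Pki V g b i k s)).
    by apply: sumr_ge0 => j _; apply: mulr_ge0 => //; apply: support.
  rewrite wsum_aff // -/u -/v fs subrr mulr0 addr0 in S.
  by rewrite -subr_ge0; rewrite pmulr_rge0 in S.
- have gz := bz bz0.
  have P0 : forall t, Pik V g b i k t = 0 by move=> t; rewrite /Pik gz bz0 !mulr0 !mul0r; lra.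
  rewrite /u P0; under eq_bigr => j _ do rewrite P0 mulr0.
  by rewrite big1.
Qed.

End Trig.

Set Implicit Arguments. Unset Strict Implicit. Unset Printing Implicit Defensive.

Section Between.
Variable R : realType.

Definition betw (a b y : R) := (a <= y <= b) \/ (b <= y <= a).

Lemma betw_split a b c y : betw a b y -> betw a c y \/ betw c b y.
Proof.
rewrite /betw => [[/andP[h1 h2]|/andP[h1 h2]]];
  (have [hc|hc] : y <= c \/ c <= y by case: (lerP y c) => h; [left|right; apply: ltW]).
all: first [by left; left; apply/andP; split; lra | by left; right; apply/andP; split; lra
  | by right; left; apply/andP; split; lra | by right; right; apply/andP; split; lra].
Qed.

Lemma sum_ivl (T : eqType) (P : pred T) (B : T -> R -> Prop)
  (HB : forall w y1 y2 y, B w y1 -> B w y2 -> betw y1 y2 y -> B w y) (s : seq T) :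
  uniq s -> forall (t1 t2 : T -> R) y,
  (forall w, w \in s -> P w -> B w (t1 w) /\ B w (t2 w)) ->
  betw (\sum_(w <- s | P w) t1 w) (\sum_(w <- s | P w) t2 w) y ->
  exists t : T -> R, (forall w, w \in s -> P w -> B w (t w)) /\
     \sum_(w <- s | P w) t w = y.
Proof.
elim: s => [|w s IH] /=.
  move=> _ t1 t2 y _; rewrite !big_nil /betw => hb.
  exists t1; split => //; rewrite big_nil.
  by case: hb => /andP[h1 h2]; apply/eqP; rewrite eq_le h1 h2.
move=> /andP[wns us] t1 t2 y hB; rewrite !big_cons.
have hB' : forall u, u \in s -> P u -> B u (t1 u) /\ B u (t2 u).
  by move=> u us' Pu; apply: hB => //; rewrite in_cons us' orbT.
case: ifP => Pw; last first.
  move=> hb; have [t [ht1 ht2]] := IH us t1 t2 y hB' hb.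
  exists t; split; last by rewrite big_cons Pw.
  move=> u; rewrite in_cons => /orP[/eqP ->|]; first by rewrite Pw.
  exact: ht1.
move=> hb.
have [Bw1 Bw2] := hB w (mem_head _ _) Pw.
have [hb1|hb2] := @betw_split _ _ (t1 w + \sum_(j <- s | P j) t2 j) _ hb.
- have hb1' : betw (\sum_(j <- s | P j) t1 j) (\sum_(j <- s | P j) t2 j) (y - t1 w).
    by case: hb1 => /andP[a1 a2]; [left|right]; apply/andP; split; lra.
  have [t [ht1 ht2]] := IH us t1 t2 _ hB' hb1'.
  exists (fun u => if u == w then t1 w else t u); split.
    by move=> u; rewrite in_cons => /orP[/eqP ->|us' Pu]; [rewrite eqxx | case: eqP => [->|_]; [|apply: ht1]].
  rewrite big_cons Pw eqxx.
  have -> : \sum_(j <- s | P j) (if j == w then t1 w else t j) = \sum_(j <- s | P j) t j.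
    rewrite big_seq_cond [RHS]big_seq_cond; apply: eq_bigr => j /andP[js _].
    by case: eqP => // ejw; move: wns; rewrite -ejw js.
  by rewrite ht2; ring.
- have hb2' : betw (t1 w) (t2 w) (y - \sum_(j <- s | P j) t2 j).
    by case: hb2 => /andP[a1 a2]; [left|right]; apply/andP; split; lra.
  have Bw := HB _ _ _ _ Bw1 Bw2 hb2'.
  exists (fun u => if u == w then y - \sum_(j <- s | P j) t2 j else t2 u); split.
    move=> u; rewrite in_cons => /orP[/eqP ->|us' Pu]; first by rewrite eqxx.
    by case: eqP => [->|_]; [|case: (hB' u us' Pu)].
  rewrite big_cons Pw eqxx.
  have -> : \sum_(j <- s | P j) (if j == w then y - \sum_(j <- s | P j) t2 j else t2 j) = \sum_(j <- s | P j) t2 j.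
    rewrite big_seq_cond [RHS]big_seq_cond; apply: eq_bigr => j /andP[js _].
    by case: eqP => // ejw; move: wns; rewrite -ejw js.
  ring.
Qed.

Lemma ivt_betw (f : R -> R) (a b y : R) : a <= b -> continuous f ->
  betw (f a) (f b) y -> exists c, a <= c <= b /\ f c = y.
Proof.
move=> ab fc hb.
have [c cI fcy] : exists2 c, c \in `[a, b] & f c = y.
  apply: IVT => //; first exact: continuous_subspaceT.
  case: hb => /andP[h1 h2]; apply/andP; split.
  - by rewrite ge_min h1.
  - by rewrite le_max h2 orbT.
  - by rewrite ge_min h1 orbT.
  - by rewrite le_max h2.
by exists c; split => //; move: cI; rewrite in_itv.
Qed.

End Between.

Section Rooted.
Variables (T : finType) (r : T) (par : T -> T) (dep : T -> nat).
Hypothesis dep_r : dep r = 0%N.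
Hypothesis dep_par : forall v, v != r -> (dep (par v)).+1 = dep v.

Definition child w v := (w != r) && (par w == v).
Definition anc v u := (dep v <= dep u)%N && (iter (dep u - dep v) par u == v).

Lemma dep0 u : dep u = 0%N -> u = r.
Proof. by move=> d0; apply/eqP; apply/negPn/negP => /dep_par; rewrite d0. Qed.

Lemma iter_dep j u : (j <= dep u)%N -> dep (iter j par u) = (dep u - j)%N.
Proof.
elim: j => [|j IH] hj; first by rewrite subn0.
rewrite iterS.
have h1 : dep (iter j par u) = (dep u - j)%N by apply: IH; apply: ltnW.
have nr : iter j par u != r.
  by apply/eqP => e; move: h1; rewrite e dep_r => /esym/eqP; rewrite subn_eq0 leqNgt hj.
have := dep_par nr; rewrite h1 => e.
apply/eqP; rewrite -eqSS e; apply/eqP.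
by rewrite -[RHS]subSn // subSS.
Qed.

Lemma anc_refl v : anc v v.
Proof. by rewrite /anc leqnn subnn /=. Qed.

Lemma child_dep w v : child w v -> dep w = (dep v).+1.
Proof. by case/andP => wr /eqP <-; rewrite dep_par. Qed.

Lemma anc_child w v u : child w v -> anc w u -> anc v u.
Proof.
move=> cwv; have dw := child_dep cwv; case/andP: cwv => wr /eqP pw.
case/andP => dwu /eqP it.
have dvu : (dep v < dep u)%N by rewrite -dw.
rewrite /anc (ltnW dvu) /=.
have -> : (dep u - dep v)%N = (dep u - dep w).+1 by rewrite dw subnSK.
by rewrite iterS it pw.
Qed.

Lemma anc_childr v u c : anc v u -> child c u -> anc v c.
Proof.
move=> /andP[dvu /eqP it] ccu; have dc := child_dep ccu; case/andP: ccu => cr /eqP pc.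
rewrite /anc dc (leq_trans dvu (leqnSn _)) /=.
by rewrite subSn // iterSr pc it.
Qed.

Lemma anc_cw v u : anc v u -> u != v ->
  child (iter (dep u - dep v).-1 par u) v /\ anc (iter (dep u - dep v).-1 par u) u.
Proof.
move=> /andP[dvu /eqP it] uv.
have lt : (dep v < dep u)%N.
  rewrite ltn_neqAle dvu andbT; apply/negP => /eqP e.
  by move: it uv; rewrite e subnn /= => ->; rewrite eqxx.
set j := (dep u - dep v).-1.
have jS : j.+1 = (dep u - dep v)%N by rewrite /j prednK // subn_gt0.
have jle : (j <= dep u)%N by rewrite /j; lia.
have dw : dep (iter j par u) = (dep v).+1.
  by rewrite iter_dep // /j; lia.
split.
- apply/andP; split; last by rewrite -iterS jS it.
  by apply/eqP => e; move: dw; rewrite e dep_r.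
- rewrite /anc dw lt /=.
  suff -> : (dep u - (dep v).+1)%N = j by [].
  by rewrite /j; lia.
Qed.

Lemma anc_uniq v w u : child w v -> anc w u -> iter (dep u - dep v).-1 par u = w.
Proof.
move=> cwv /andP[dwu /eqP it]; have dw := child_dep cwv.
by rewrite -it dw subnS.
Qed.

Lemma anc_root u : anc r u.
Proof.
rewrite /anc dep_r leq0n subn0 /=; apply/eqP; apply: dep0.
by rewrite iter_dep // subnn.
Qed.

Lemma anc_dep v u : anc v u -> (dep v <= dep u)%N.
Proof. by case/andP. Qed.

End Rooted.

Section DP.
Variables (R : realType) (T : finType) (r : T) (par : T -> T) (dep : T -> nat).
Hypothesis dep_r : dep r = 0%N.
Hypothesis dep_par : forall v, v != r -> (dep (par v)).+1 = dep v.
Variables (l h : T -> R) (al be : T -> R -> R).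
Hypothesis al_cont : forall v, continuous (al v).
Hypothesis be_cont : forall v, continuous (be v).
Hypothesis mono : forall v t1 t2, l v <= t1 -> t1 <= t2 -> t2 <= h v ->
  al v t1 <= al v t2 /\ be v t2 <= be v t1.

Local Notation child := (child r par).
Local Notation anc := (anc par dep).

Definition pp (th : T -> R) u := al u (th u) + \sum_(w | child w u) be w (th w).

Variables (s ph x : T -> R).
Hypothesis s_in : forall u, l u <= s u <= h u.
Hypothesis ph_in : forall u, l u <= ph u <= h u.
Hypothesis sx : forall u, pp s u <= x u.

Definition mm u := Num.min (x u) (pp ph u).

Definition Feas v t := exists th : T -> R, th v = t /\
  forall u, anc v u -> (l u <= th u <= h u) /\ (mm u <= pp th u <= x u).

Lemma Feas_a v t : Feas v t -> (l v <= t <= h v) /\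
  exists tau : T -> R, (forall w, child w v -> Feas w (tau w)) /\
    mm v <= al v t + \sum_(w | child w v) be w (tau w) <= x v.
Proof.
case=> th [thv H]; have [H1 H2] := H v (anc_refl _ _ _).
rewrite -thv; split => //; exists th; split => //.
move=> w cw; exists th; split => // u awu; apply: H.
exact: (anc_child dep_par cw awu).
Qed.

Lemma Feas_b v t tau : l v <= t <= h v -> (forall w, child w v -> Feas w (tau w)) ->
    mm v <= al v t + \sum_(w | child w v) be w (tau w) <= x v -> Feas v t.
Proof.
move=> tI Htau Hv.
have [Th HT] : {Th : T -> T -> R & forall w, child w v -> Th w w = tau w /\
  forall u, anc w u -> (l u <= Th w u <= h u) /\ (mm u <= pp (Th w) u <= x u)}.
  apply: (@choice _ _ (fun (w : T) (th : T -> R) => child w v -> th w = tau w /\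
  forall u, anc w u -> (l u <= th u <= h u) /\ (mm u <= pp th u <= x u))).
  move=> w; case: (boolP (child w v)) => cw; last by exists (fun _ => 0).
  by have [th Hth] := Htau w cw; exists th.
set cw := fun u => iter (dep u - dep v).-1 par u.
exists (fun u => if u == v then t else Th (cw u) u); split; first by rewrite eqxx.
have agree : forall w u, child w v -> anc w u ->
    (if u == v then t else Th (cw u) u) = Th w u.
  move=> w u cwv awu.
  have nv : u != v.
    apply/eqP => e; move: (anc_dep awu); rewrite e (child_dep dep_par cwv).
    by rewrite ltnn.
  by rewrite (negbTE nv) /cw (anc_uniq dep_par cwv awu).
move=> u avu; case: (eqVneq u v) => [->|uv].
- split => //.
  rewrite /pp eqxx.
  have -> : \sum_(w | child w v) be w (if w == v then t else Th (cw w) w) =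
            \sum_(w | child w v) be w (tau w).
    apply: eq_bigr => w cwv; rewrite (agree w w cwv (anc_refl _ _ _)).
    by case: (HT w cwv) => ->.
  exact: Hv.
- have [cc acu] := anc_cw dep_r dep_par avu uv.
  set w := iter (dep u - dep v).-1 par u in cc acu.
  have [_ Hw] := HT w cc.
  have [Hw1 Hw2] := Hw u acu.
  split; first exact: Hw1.
  rewrite /pp /= (agree w u cc acu).
  under eq_bigr => c ccu do rewrite (agree w c cc (anc_childr dep_par acu ccu)).
  exact: Hw2.
Qed.

Definition Inv v := (forall t1 t2 t, Feas v t1 -> Feas v t2 -> t1 <= t -> t <= t2 -> Feas v t) /\
  (exists t, Feas v t /\ be v (ph v) <= be v t) /\ (exists t, Feas v t /\ be v t <= be v (s v)).

Lemma Bivl w : Inv w -> forall y1 y2 y, (exists t, Feas w t /\ be w t = y1) ->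
  (exists t, Feas w t /\ be w t = y2) -> betw y1 y2 y -> exists t, Feas w t /\ be w t = y.
Proof.
move=> [cv _] y1 y2 y [t1 [F1 e1]] [t2 [F2 e2]] hb.
have [le12|lt21] := leP t1 t2.
- have hb' : betw (be w t1) (be w t2) y by rewrite e1 e2.
  have [c [/andP[c1 c2] fc]] := ivt_betw le12 (@be_cont w) hb'.
  by exists c; split => //; apply: (cv t1 t2).
- have hb' : betw (be w t2) (be w t1) y by rewrite e1 e2; case: hb; [right|left].
  have [c [/andP[c1 c2] fc]] := ivt_betw (ltW lt21) (@be_cont w) hb'.
  by exists c; split => //; apply: (cv t2 t1).
Qed.

Definition Sach v sg := exists tau : T -> R, (forall w, child w v -> Feas w (tau w)) /\
  \sum_(w | child w v) be w (tau w) = sg.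

Lemma Sach_ivl v : (forall w, child w v -> Inv w) -> forall sg1 sg2 y,
  Sach v sg1 -> Sach v sg2 -> betw sg1 sg2 y -> Sach v y.
Proof.
move=> Hc sg1 sg2 y [t1 [F1 e1]] [t2 [F2 e2]] hb.
pose B w y := child w v -> exists t, Feas w t /\ be w t = y.
have HB : forall w y1 y2 y, B w y1 -> B w y2 -> betw y1 y2 y -> B w y.
  move=> w y1' y2' y' b1 b2 hb' cw.
  exact: (Bivl (Hc w cw) (b1 cw) (b2 cw) hb').
have hbs : betw (\sum_(w | child w v) be w (t1 w)) (\sum_(w | child w v) be w (t2 w)) y.
  by rewrite e1 e2.
have [t [Ht Hs]] := @sum_ivl R T (fun w => child w v) B HB (index_enum T) (index_enum_uniq T)
  (fun w => be w (t1 w)) (fun w => be w (t2 w)) y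
  (fun w _ cw => conj (fun _ => ex_intro _ (t1 w) (conj (F1 w cw) erefl))
                      (fun _ => ex_intro _ (t2 w) (conj (F2 w cw) erefl)))
  hbs.
have [tau Htau] : {tau : T -> R & forall w, child w v -> Feas w (tau w) /\ be w (tau w) = t w}.
  apply: (@choice _ _ (fun w tw => child w v -> Feas w tw /\ be w tw = t w)) => w.
  case: (boolP (child w v)) => cw; last by exists 0.
  have [tw [Fw ew]] := Ht w (mem_index_enum w) cw cw.
  by exists tw.
exists tau; split; first by move=> w cw; case: (Htau w cw).
rewrite -Hs; apply: eq_bigr => w cw; by case: (Htau w cw).
Qed.

Lemma step v : (forall w, child w v -> Inv w) -> Inv v.
Proof.
move=> Hc.
have [tA HA] : {tA : T -> R & forall w, child w v -> Feas w (tA w) /\ be w (ph w) <= be w (tA w)}.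
  apply: (@choice _ _ (fun w tw => child w v -> Feas w tw /\ be w (ph w) <= be w tw)) => w.
  case: (boolP (child w v)) => cw; last by exists 0.
  by have [_ [[t Ht] _]] := Hc w cw; exists t.
have [tB HB] : {tB : T -> R & forall w, child w v -> Feas w (tB w) /\ be w (tB w) <= be w (s w)}.
  apply: (@choice _ _ (fun w tw => child w v -> Feas w tw /\ be w tw <= be w (s w))) => w.
  case: (boolP (child w v)) => cw; last by exists 0.
  by have [_ [_ [t Ht]]] := Hc w cw; exists t.
set SA := \sum_(w | child w v) be w (tA w).
set SB := \sum_(w | child w v) be w (tB w).
have SAa : Sach v SA by exists tA; split => // w cw; case: (HA w cw).
have SBa : Sach v SB by exists tB; split => // w cw; case: (HB w cw).
have ZA : \sum_(w | child w v) be w (ph w) <= SA by apply: ler_sum => w cw; case: (HA w cw).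
have QB : SB <= \sum_(w | child w v) be w (s w) by apply: ler_sum => w cw; case: (HB w cw).
have sxv := @sx v; rewrite /pp in sxv.
have mx : mm v <= x v by rewrite /mm ge_min lexx.
have mph : mm v <= al v (ph v) + \sum_(w | child w v) be w (ph w) by rewrite /mm ge_min lexx orbT.
have H : forall t S1 S2, l v <= t <= h v -> Sach v S1 -> Sach v S2 ->
    mm v <= al v t + S1 -> al v t + S2 <= x v -> Feas v t.
  move=> t S1 S2 tI a1 a2 h1 h2.
  have [y [ya [y1 y2]]] : exists y, Sach v y /\ mm v <= al v t + y /\ al v t + y <= x v.
    have [c1|c1] := lerP (al v t + S1) (x v); first by exists S1.
    have [c2|c2] := lerP (mm v) (al v t + S2); first by exists S2.
    exists (x v - al v t); split; last by split; lra.
    by apply: (Sach_ivl Hc a2 a1); left; apply/andP; split; lra.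
  case: ya => tau [Ft et].
  by apply: (Feas_b tI Ft); rewrite et y1 y2.
have [sl sh] := andP (@s_in v); have [pl phh] := andP (@ph_in v).
split; [|split].
- move=> t1 t2 t F1 F2 le1 le2.
  have [/andP[l1 h1] [tau1 [Ft1 /andP[a1 b1]]]] := Feas_a F1.
  have [/andP[l2 h2] [tau2 [Ft2 /andP[a2 b2]]]] := Feas_a F2.
  have [m1 _] := mono l1 le1 (le_trans le2 h2).
  have [m2 _] := mono (le_trans l1 le1) le2 h2.
  apply: (H t _ _ _ (ex_intro _ tau1 (conj Ft1 erefl)) (ex_intro _ tau2 (conj Ft2 erefl))).
  + by rewrite (le_trans l1 le1) (le_trans le2 h2).
  + lra.
  + lra.
- have [phs|sph] := lerP (ph v) (s v).
  + have [m1 _] := mono pl phs sh.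
    exists (ph v); split => //; apply: (H _ SA SB) => //; try (by rewrite ?pl ?phh ?sl ?sh); lra.
  + have [c1|c1] := lerP (al v (ph v) + SB) (x v).
      exists (ph v); split => //; apply: (H _ SA SB) => //; try (by rewrite ?pl ?phh ?sl ?sh); lra.
    have [m1 _] := mono sl (ltW sph) phh.
    have hb : betw (al v (s v)) (al v (ph v)) (x v - SB) by left; apply/andP; split; lra.
    have [t [/andP[t1 t2] et]] := ivt_betw (ltW sph) (@al_cont v) hb.
    exists t; split; last by have [_ ] := mono (le_trans sl t1) t2 phh.
    apply: (H _ SB SB) => //; try (by rewrite (le_trans sl t1) (le_trans t2 phh)); lra.
- have [phs|sph] := lerP (ph v) (s v).
  + have [m1 _] := mono pl phs sh.
    exists (s v); split => //; apply: (H _ SA SB) => //; try (by rewrite ?pl ?phh ?sl ?sh); lra.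
  + have [c1|c1] := lerP (mm v) (al v (s v) + SA).
      exists (s v); split => //; apply: (H _ SA SB) => //; try (by rewrite ?pl ?phh ?sl ?sh); lra.
    have [m1 _] := mono sl (ltW sph) phh.
    have hb : betw (al v (s v)) (al v (ph v)) (mm v - SA) by left; apply/andP; split; lra.
    have [t [/andP[t1 t2] et]] := ivt_betw (ltW sph) (@al_cont v) hb.
    exists t; split; last by have [_ ] := mono sl t1 (le_trans t2 phh).
    apply: (H _ SA SA) => //; try (by rewrite (le_trans sl t1) (le_trans t2 phh)); lra.
Qed.

Lemma all_Inv v : Inv v.
Proof.
have gen : forall k v, (forall u, anc v u -> (dep u <= dep v + k)%N) -> Inv v.
  elim=> [|k IH] v0 hv; apply: step => w cw.
  - have := hv w (anc_child dep_par cw (anc_refl _ _ _)).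
    by rewrite (child_dep dep_par cw) addn0 ltnn.
  - apply: IH => u awu; have := hv u (anc_child dep_par cw awu).
    by rewrite (child_dep dep_par cw) addnS addSn.
apply: (gen (\max_u dep u)) => u _.
by apply: leq_trans (leq_addl _ _); apply: leq_bigmax.
Qed.

Lemma DP_exists : exists th : T -> R, (forall u, l u <= th u <= h u) /\
  forall u, mm u <= pp th u <= x u.
Proof.
have [_ [[t [[th [_ Hth]] _]] _]] := all_Inv r.
exists th; split => u; have := Hth u (anc_root dep_r dep_par u); case=> //.
Qed.

End DP.

Section Tree.
Variables (n : nat) (E : {set 'I_n * 'I_n}) (r : 'I_n).

Fixpoint reach (j : nat) (v : 'I_n) : bool :=
  match j with 0 => v == r | j'.+1 => [exists u, reach j' u && adj E u v] end.

Lemma reach_path p x j : reach j x -> path (adj E) x p -> reach (j + size p) (last x p).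
Proof.
elim: p x j => [|y p IH] x j /= hx; first by rewrite addn0.
case/andP => axy hp; rewrite addnS -addSn; apply: IH hp => /=.
by apply/existsP; exists x; rewrite hx axy.
Qed.

Lemma adj_sym : symmetric (adj E).
Proof. by move=> i k; rewrite /adj orbC. Qed.

Lemma root_tree : is_tree E -> 
  exists par : 'I_n -> 'I_n, exists dep : 'I_n -> nat,
    [/\ dep r = 0%N, (forall v, v != r -> (dep (par v)).+1 = dep v) &
        forall i k, adj E i k = child r par i k || child r par k i].
Proof.
case=> n0 noloop orient conn cardE.
have ex : forall v, exists j, reach j v.
  move=> v; have /connectP [p hp ->] := conn r v.
  by exists (0 + size p)%N; apply: reach_path => //=.
pose dep v := ex_minn (ex v).
have depP : forall v, reach (dep v) v /\ forall j, reach j v -> (dep v <= j)%N.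
  by move=> v; rewrite /dep; case: ex_minnP => m Pm Hm; split.
have step : forall u v, adj E u v -> (dep v <= (dep u).+1)%N.
  move=> u v a; apply: (depP v).2 => /=; apply/existsP; exists u.
  by rewrite (depP u).1 a.
have dr : dep r = 0%N.
  by apply/eqP; rewrite -leqn0; apply: (depP r).2 => /=.
have [par Hpar] : {par : 'I_n -> 'I_n & forall v, v != r ->
      reach (dep v).-1 (par v) && adj E (par v) v}.
  apply: (@choice _ _ (fun v u => v != r -> reach (dep v).-1 u && adj E u v)) => v.
  case: (eqVneq v r) => [->|vr]; first by exists r.
  have := (depP v).1; case e: (dep v) => [|j] /=.
    by move=> /eqP evr; move: vr; rewrite evr eqxx.
  by case/existsP => u hu; exists u.
have dpar : forall v, v != r -> (dep (par v)).+1 = dep v.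
  move=> v vr; have /andP[h1 h2] := Hpar v vr.
  have d1 := (depP _).2 _ h1.
  have d2 := step _ _ h2.
  have d0 : dep v != 0%N.
    apply/eqP => e; have := (depP v).1; rewrite e /= => /eqP evr.
    by move: vr; rewrite evr eqxx.
  lia.
exists par, dep; split => // i k.
have childadj : forall a c, child r par a c -> adj E a c.
  by move=> a c /andP[ar /eqP <-]; rewrite adj_sym; case/andP: (Hpar a ar).
apply/idP/idP; last by case/orP => /childadj //; rewrite adj_sym.
pose psi v := if (v, par v) \in E then (v, par v) else (par v, v).
pose D := [set v | v != r].
have psiE : forall v, v \in D -> psi v \in E.
  move=> v; rewrite inE => vr; rewrite /psi; case: ifP => // hn.
  by have /andP[_] := Hpar v vr; rewrite /adj hn orbF.
have psi_inj : {in D &, injective psi}.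
  move=> v v'; rewrite !inE => vr v'r.
  have dv := dpar v vr; have dv' := dpar v' v'r.
  rewrite /psi; case: ifP => _; case: ifP => _ [e1 e2] //;
  first [by move: dv dv'; rewrite e2 -e1; lia | by move: dv dv'; rewrite e1 -e2; lia
        | by move: dv dv'; rewrite -e2 e1; lia | by move: dv dv'; rewrite -e1 e2; lia].
have cD : #|D| = n.-1.
  rewrite (_ : D = [set~ r]); last by apply/setP => v; rewrite !inE.
  by rewrite cardsC1 card_ord.
have imE : psi @: D = E.
  apply/eqP; rewrite eqEcard; apply/andP; split.
    by apply/fintype.subsetP => e /imsetP [v vD ->]; apply: psiE.
  by rewrite (card_in_imset psi_inj) cD cardE.
move=> a.
have [ik|ki] : (i, k) \in E \/ (k, i) \in E by case/orP: a; [left|right].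
- move: ik; rewrite -imE => /imsetP [v]; rewrite inE => vr.
  rewrite /psi; case: ifP => _ [-> ->].
  + by rewrite /child vr eqxx.
  + by rewrite /child vr eqxx orbT.
- move: ki; rewrite -imE => /imsetP [v]; rewrite inE => vr.
  rewrite /psi; case: ifP => _ [-> ->].
  + by rewrite /child vr eqxx orbT.
  + by rewrite /child vr eqxx.
Qed.

End Tree.

Section Glue.
Variables (R : realType) (n : nat) (E : {set 'I_n * 'I_n}).
Variables (V : 'I_n -> R) (g b lo hi : 'I_n -> 'I_n -> R).
Hypothesis Vpos : forall i, 0 < V i.
Hypothesis gb : forall i k, (i, k) \in E -> 0 <= g i k /\ 0 <= b i k.
Hypothesis ang : forall i k, (i, k) \in E ->
     - crit_angle (g i k) (b i k) < lo i k /\ lo i k <= hi i k /\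
     hi i k < crit_angle (g i k) (b i k).
Hypothesis orient : forall i k, (i, k) \in E -> (k, i) \notin E.
Variables (r : 'I_n) (par : 'I_n -> 'I_n) (dep : 'I_n -> nat).
Hypothesis dep_r : dep r = 0%N.
Hypothesis dep_par : forall v, v != r -> (dep (par v)).+1 = dep v.
Hypothesis adjc : forall i k, adj E i k = child r par i k || child r par k i.

Local Notation child := (child r par).

Definition fwd v := (v, par v) \in E.
Definition gl v := if v == r then 0 else if fwd v then lo v (par v) else - hi (par v) v.
Definition gh v := if v == r then 0 else if fwd v then hi v (par v) else - lo (par v) v.
Definition gal v (t : R) := if v == r then 0 else
  if fwd v then Pik V g b v (par v) t else Pki V g b (par v) v (- t).
Definition gbe v (t : R) := if v == r then 0 else
  if fwd v then Pki V g b v (par v) t else Pik V g b (par v) v (- t).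

Lemma edge_of v : v != r -> if fwd v then (v, par v) \in E else (par v, v) \in E.
Proof.
move=> vr; rewrite /fwd; case: ifP => // hn.
have : adj E v (par v) by rewrite adjc /child vr eqxx.
by rewrite /adj hn.
Qed.

Lemma child_excl i k : child i k -> child k i -> False.
Proof.
move=> c1 c2; have d1 := child_dep dep_par c1; have d2 := child_dep dep_par c2; lia.
Qed.

Lemma gal_cont v : continuous (gal v).
Proof.
rewrite /gal; case: (v == r); first by move=> x; exact: cvg_cst.
case: (fwd v); first exact: Pik_cont.
have -> : (fun t => Pki V g b (par v) v (- t)) =
  (fun t => V v ^+ 2 * g (par v) v + (V (par v) * V v * b (par v) v) * sin t
            - V (par v) * V v * g (par v) v * cos t).
  by apply: funext => t; rewrite /Pki sinN cosN mulrN opprK.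
exact: cont_trig.
Qed.

Lemma gbe_cont v : continuous (gbe v).
Proof.
rewrite /gbe; case: (v == r); first by move=> x; exact: cvg_cst.
case: (fwd v); first exact: Pki_cont.
have -> : (fun t => Pik V g b (par v) v (- t)) =
  (fun t => V (par v) ^+ 2 * g (par v) v + (- (V (par v) * V v * b (par v) v)) * sin t
            - V (par v) * V v * g (par v) v * cos t).
  by apply: funext => t; rewrite /Pik sinN cosN mulrN mulNr.
exact: cont_trig.
Qed.

Lemma gmono v t1 t2 : gl v <= t1 -> t1 <= t2 -> t2 <= gh v ->
  gal v t1 <= gal v t2 /\ gbe v t2 <= gbe v t1.
Proof.
rewrite /gl /gh /gal /gbe; case: eqVneq => [_|vr]; first by rewrite lexx.
have := edge_of vr; case: (fwd v) => he h1 h12 h2.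
- have [g0 b0] := gb he; have [a1 [a2 a3]] := ang he.
  by apply: P_mono => //; lra.
- have [g0 b0] := gb he; have [a1 [a2 a3]] := ang he.
  have := @P_mono R n V g b (par v) v (- t2) (- t1) (Vpos _) (Vpos _) g0 b0.
  case; try lra; move=> x y; split; lra.
Qed.

Lemma gharc v m (w : 'I_m -> R) (ts : 'I_m -> R) :
  (forall j, 0 <= w j) -> \sum_(j < m) w j = 1 -> (forall j, gl v <= ts j <= gh v) ->
  exists s, gl v <= s <= gh v /\ gal v s <= \sum_(j < m) w j * gal v (ts j) /\
                               gbe v s <= \sum_(j < m) w j * gbe v (ts j).
Proof.
move=> w0 w1 hts; rewrite /gl /gh /gal /gbe in hts *.
case: eqVneq hts => [_|vr] hts.
  exists 0; rewrite lexx; split => //.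
  by rewrite big1 ?lexx // => j _; rewrite mulr0.
have := edge_of vr; case: (fwd v) hts => hts he; have [g0 b0] := gb he; have [a1 [a2 a3]] := ang he.
- exact: arc_conv.
- have hts' : forall j, lo (par v) v <= - ts j <= hi (par v) v.
    by move=> j; case/andP: (hts j) => c1 c2; apply/andP; split; lra.
  have [s [/andP[s1 s2] [e1 e2]]] := arc_conv _ _ _ _ _ _ _ _ _ _ _ (fun j => - ts j) (Vpos _) (Vpos _) g0 b0 a1 a2 a3 w0 w1 hts'.
  exists (- s); rewrite opprK; split; first by apply/andP; split; lra.
  by split.
Qed.

Lemma Edir_adj d : (d \in Edir E) = adj E d.1 d.2.
Proof.
rewrite /Edir /adj finset.in_setU; congr (_ || _).
  by case: d.
apply/finset.imsetP/idP => [[e he ->]|h]; first by case: e he.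
by exists (d.2, d.1) => //; case: d h.
Qed.

Lemma Amap_pp (f : 'I_n * 'I_n -> R) (th : 'I_n -> R) :
  (forall i k, adj E i k -> f (i, k) = if child i k then gal i (th i) else gbe k (th k)) ->
  forall u, Amap E f u = pp r par gal gbe th u.
Proof.
move=> hf u; rewrite /Amap.
have -> : \sum_(d in Edir E | d.1 == u) f d = \sum_(i | i == u) \sum_(k | adj E i k) f (i, k).
  rewrite pair_big_dep /=; apply: eq_big.
    by case=> i k /=; rewrite Edir_adj /= andbC.
  by case.
rewrite big_pred1_eq.
rewrite (eq_bigr (fun k => (if child u k then gal u (th u) else 0) + (if child k u then gbe k (th k) else 0))); last first.
  move=> k a; rewrite hf //; case: ifP => c1; case: ifP => c2; rewrite ?addr0 ?add0r //.
  - by exfalso; apply: (child_excl c1 c2).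
  - by move: a; rewrite adjc c1 c2.
rewrite big_split /= /pp; congr (_ + _).
- rewrite -big_mkcondr /=.
  case: (eqVneq u r) => [->|ur].
    rewrite big1; first by rewrite /gal eqxx.
    by move=> k /andP[_ ck]; rewrite /child eqxx in ck.
  rewrite (eq_bigl (fun k => k == par u)); first by rewrite big_pred1_eq.
  move=> k; apply/idP/idP.
  + by case/andP=> _ ck; rewrite /child ur eq_sym in ck.
  + by move=> e; rewrite adjc /child ur eq_sym e.
- rewrite -big_mkcondr /=; apply: eq_bigl => k.
  rewrite adjc; case: (child k u); by rewrite ?orbT ?andbF ?andbT.
Qed.

End Glue.

Local Open Scope classical_set_scope.

Section Abstract.
Variables (R : realType) (T : finType) (r : T) (par : T -> T) (dep : T -> nat).
Hypothesis dep_r : dep r = 0%N.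
Hypothesis dep_par : forall v, v != r -> (dep (par v)).+1 = dep v.
Variables (l h : T -> R) (al be : T -> R -> R).
Hypothesis al_cont : forall v, continuous (al v).
Hypothesis be_cont : forall v, continuous (be v).
Hypothesis mono : forall v t1 t2, l v <= t1 -> t1 <= t2 -> t2 <= h v ->
  al v t1 <= al v t2 /\ be v t2 <= be v t1.
Hypothesis harc : forall v m (w : 'I_m -> R) (ts : 'I_m -> R),
  (forall j, 0 <= w j) -> \sum_(j < m) w j = 1 -> (forall j, l v <= ts j <= h v) ->
  exists s, l v <= s <= h v /\ al v s <= \sum_(j < m) w j * al v (ts j) /\
                               be v s <= \sum_(j < m) w j * be v (ts j).

Local Notation child := (child r par).
Local Notation pp := (pp r par al be).

Definition Pset : set (T -> R) :=
  [set p | exists th : T -> R, (forall u, l u <= th u <= h u) /\ forall u, p u = pp th u].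

Lemma conv_below x : convex_hull Pset x ->
  exists th : T -> R, (forall u, l u <= th u <= h u) /\ forall u, pp th u <= x u.
Proof.
case=> m [w [pts [w0 [w1 [Ppts xe]]]]].
have [TH HTH] : {TH : 'I_m -> T -> R & forall j, (forall u, l u <= TH j u <= h u) /\
    forall u, pts j u = pp (TH j) u}.
  by apply: (@choice _ _ (fun j th => (forall u, l u <= th u <= h u) /\ forall u, pts j u = pp th u)) => j; apply: Ppts.
have [S HS] : {S : T -> R & forall v, l v <= S v <= h v /\
    al v (S v) <= \sum_(j < m) w j * al v (TH j v) /\
    be v (S v) <= \sum_(j < m) w j * be v (TH j v)}.
  apply: (@choice _ _ (fun v sv => l v <= sv <= h v /\
    al v sv <= \sum_(j < m) w j * al v (TH j v) /\
    be v sv <= \sum_(j < m) w j * be v (TH j v))) => v.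
  by apply: harc => // j; case: (HTH j) => H _; apply: H.
exists S; split; first by move=> u; case: (HS u).
move=> u; rewrite xe.
have -> : \sum_(j < m) w j * pts j u =
  \sum_(j < m) w j * al u (TH j u) + \sum_(c | child c u) \sum_(j < m) w j * be c (TH j c).
  rewrite [X in _ = _ + X]exchange_big /= -big_split /=.
  apply: eq_bigr => j _; case: (HTH j) => _ ->; rewrite /pp mulrDr mulr_sumr //.
rewrite /pp; apply: lerD; first by case: (HS u) => _ [].
by apply: ler_sum => c _; case: (HS c) => _ [].
Qed.

Theorem abstract_pareto (Plo Phi : T -> R) :
  (Pset `&` [set p | forall i, Plo i <= p i <= Phi i]) !=set0 ->
  pareto (Pset `&` [set p | forall i, Plo i <= p i <= Phi i]) =
  pareto (convex_hull Pset `&` [set p | forall i, Plo i <= p i <= Phi i]).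
Proof.
set B := [set p | forall i, Plo i <= p i <= Phi i].
move=> [z [[thz [zin ze]] zB]].
have PC : forall p, Pset p -> convex_hull Pset p.
  move=> p Pp; exists 1%N, (fun _ => 1), (fun _ => p); split => //.
  split; first by rewrite big_ord1.
  split => // i; by rewrite big_ord1 mul1r.
have key : forall y (thy : T -> R), convex_hull Pset y ->
    (forall u, l u <= thy u <= h u) ->
    exists th : T -> R, (forall u, l u <= th u <= h u) /\
      forall u, Num.min (y u) (pp thy u) <= pp th u <= y u.
  move=> y thy Cy thyin.
  have [s [sin sy]] := conv_below Cy.
  have [th [thin Hth]] := DP_exists dep_r dep_par al_cont be_cont mono sin thyin sy.
  by exists th; split.
apply/seteqP; split => x.
- move=> [[Px Bx] nd]; split; first by split => //; apply: PC.
  move=> [y [[Cy By] [yx [i yi]]]]; apply: nd.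
  case: Px => thx [thxin xe].
  have [th [thin Hth]] := key y thx Cy thxin.
  exists y; split; last by split => //; exists i.
  split => //; exists th; split => // u.
  have := Hth u; rewrite -xe.
  have -> : Num.min (y u) (x u) = y u by apply/min_idPl; apply: yx.
  by move=> /andP[a b]; apply/eqP; rewrite eq_le a b.
- move=> [[Cx Bx] nd].
  have [th [thin Hth]] := key x thz Cx zin.
  have Pth : Pset (pp th) by exists th.
  have Bth : B (pp th).
    move=> i; have := Hth i; rewrite -ze => /andP[a b].
    have [b1 b2] := andP (Bx i); have [z1 z2] := andP (zB i).
    apply/andP; split; last exact: le_trans b b2.
    by apply: le_trans a; rewrite le_min b1 z1.
  have ex : x = pp th.
    apply: funext => u; apply/eqP; rewrite eq_le; case/andP: (Hth u) => _ ->; rewrite /=.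
    case: (lerP (x u) (pp th u)) => // hlt; exfalso; apply: nd.
    exists (pp th); split; first by split => //; apply: PC.
    split; first by move=> i; case/andP: (Hth i).
    by exists u.
  split; first by split => //; rewrite ex.
  move=> [y [[Py By] [yx [i yi]]]]; apply: nd.
  exists y; split; first by split => //; apply: PC.
  by split => //; exists i.
Qed.

End Abstract.

Unset Implicit Arguments. Set Strict Implicit. Set Printing Implicit Defensive.

Lemma Ptheta_eq (R : realType) (n : nat) (E : {set 'I_n * 'I_n})
  (V : 'I_n -> R) (g b lo hi : 'I_n -> 'I_n -> R)
  (orient : forall i k, (i, k) \in E -> (k, i) \notin E)
  (r : 'I_n) (par : 'I_n -> 'I_n) (dep : 'I_n -> nat)
  (dep_r : dep r = 0%N) (dep_par : forall v, v != r -> (dep (par v)).+1 = dep v)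
  (adjc : forall i k, adj E i k = child r par i k || child r par k i) :
  P_theta E V g b lo hi =
  Pset r par (gl E lo hi r par) (gh E lo hi r par) (gal E V g b r par) (gbe E V g b r par).
Proof.
apply/seteqP; split => p.
- case=> f Ff <-.
  have [th Hth0] : {th : 'I_n -> R & forall v, (v == r -> th v = 0) /\ (v != r ->
      (gl E lo hi r par v <= th v <= gh E lo hi r par v) /\
      (fwd E par v -> f (v, par v) = Pik V g b v (par v) (th v) /\
                      f (par v, v) = Pki V g b v (par v) (th v)) /\
      (~~ fwd E par v -> f (par v, v) = Pik V g b (par v) v (- th v) /\
                      f (v, par v) = Pki V g b (par v) v (- th v)))}.
    apply: (@choice _ _ (fun v t => (v == r -> t = 0) /\ (v != r ->
      (gl E lo hi r par v <= t <= gh E lo hi r par v) /\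
      (fwd E par v -> f (v, par v) = Pik V g b v (par v) t /\
                      f (par v, v) = Pki V g b v (par v) t) /\
      (~~ fwd E par v -> f (par v, v) = Pik V g b (par v) v (- t) /\
                      f (v, par v) = Pki V g b (par v) v (- t))))) => v.
    case: (eqVneq v r) => [->|vr]; first by exists 0; split => // /eqP.
    suff [t Ht] : exists t, (v != r ->
      (gl E lo hi r par v <= t <= gh E lo hi r par v) /\
      (fwd E par v -> f (v, par v) = Pik V g b v (par v) t /\
                      f (par v, v) = Pki V g b v (par v) t) /\
      (~~ fwd E par v -> f (par v, v) = Pik V g b (par v) v (- t) /\
                      f (v, par v) = Pki V g b (par v) v (- t))).
      by exists t; split => // _; exact: Ht vr.
    have := edge_of adjc vr; rewrite /gl /gh (negbTE vr).
    case fv: (fwd E par v) => he.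
    + have [t [/andP[t1 t2] [e1 e2]]] := Ff _ _ he.
      by exists t => _; rewrite t1 t2; split.
    + have [t [/andP[t1 t2] [e1 e2]]] := Ff _ _ he.
      exists (- t) => _; rewrite opprK; split; last by split.
      by apply/andP; split; lra.
  have Hth : forall v, v != r -> _ := fun v => (Hth0 v).2.
  exists th; split.
    move=> u; case: (eqVneq u r) => [->|ur]; first by rewrite /gl /gh eqxx (Hth0 r).1 ?lexx.
    by case: (Hth u ur).
  move=> u; apply: (Amap_pp dep_r dep_par adjc) => i k a.
  case ci: (child r par i k).
    case/andP: ci => ir /eqP pik; rewrite /gal (negbTE ir); subst k.
    have [_ [H1 H2]] := Hth i ir.
    by case fi: (fwd E par i); [case: (H1 fi) | case: (H2 (negbT fi))].
  move: a; rewrite adjc ci /= => /andP[kr /eqP pki]; subst i.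
  rewrite /gbe (negbTE kr).
  have [_ [H1 H2]] := Hth k kr.
  by case fk: (fwd E par k); [case: (H1 fk) | case: (H2 (negbT fk))].
- case=> th [thin pe].
  exists (fun d => if child r par d.1 d.2 then gal E V g b r par d.1 (th d.1)
                   else gbe E V g b r par d.2 (th d.2)); last first.
    apply: funext => u; rewrite pe; apply: (Amap_pp dep_r dep_par adjc) => i k _ //.
  move=> i k ik /=.
  have : adj E i k by rewrite /adj ik.
  rewrite adjc => /orP[ci|ck].
  + have ci' := ci; case/andP: ci' => ir /eqP pik.
    have nck : child r par k i = false.
      by apply/negbTE/negP => ck; apply: (child_excl dep_r dep_par ci ck).
    have fi : fwd E par i by rewrite /fwd pik.
    have := thin i; rewrite /gl /gh /gal /gbe (negbTE ir) fi ci nck pik => ti.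
    by exists (th i); split.
  + have ck' := ck; case/andP: ck' => kr /eqP pki.
    have nci : child r par i k = false.
      by apply/negbTE/negP => ci; apply: (child_excl dep_r dep_par ci ck).
    have fk : fwd E par k = false by rewrite /fwd pki; apply/negbTE; apply: orient.
    have := thin k; rewrite /gl /gh /gal /gbe (negbTE kr) fk ck nci pki => tk.
    exists (- th k); split; last by []...
    by case/andP: tk => t1 t2; apply/andP; split; lra.
Qed.

Theorem lemma3 (R : realType) (n : nat) (E : {set 'I_n * 'I_n})
  (V : 'I_n -> R) (g b lo hi : 'I_n -> 'I_n -> R) (Plo Phi : 'I_n -> R) :
  is_tree E ->
  (forall i, 0 < V i) ->
  (forall i k, (i, k) \in E -> 0 <= g i k /\ 0 <= b i k) ->
  (forall i k, (i, k) \in E -> - pi <= lo i k <= 0 /\ 0 <= hi i k <= pi) ->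
  (forall i k, (i, k) \in E ->
     - crit_angle (g i k) (b i k) < lo i k /\ lo i k <= hi i k /\
     hi i k < crit_angle (g i k) (b i k)) ->
  (P_theta E V g b lo hi `&` P_P Plo Phi) !=set0 ->
  pareto (P_theta E V g b lo hi `&` P_P Plo Phi) =
  pareto (convex_hull (P_theta E V g b lo hi) `&` P_P Plo Phi).
Proof.
move=> tree Vpos gb _ ang ne.
have tree' := tree; case: tree' => n0 _ orient _ _.
pose r := Ordinal n0.
have [par [dep [dep_r dep_par adjc]]] := root_tree r tree.
have Pe := Ptheta_eq _ _ _ V g b lo hi orient _ _ _ dep_r dep_par adjc.
rewrite Pe in ne *.
apply: (abstract_pareto dep_r dep_par).
- exact: gal_cont.
- exact: gbe_cont.
- exact: (gmono Vpos gb ang adjc).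
- exact: (gharc Vpos gb ang adjc).
- exact: ne.
Qed.
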